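(* Let $W$ be a positive word such that $W\doteq\Delta V$ for some positive word $V$. Then every node of the diagram $D(W)$ is incident with an edge labelled $\sigma_i$ for each $i=1,\dots,n-1$; that is, for every node $P$ of $D(W)$ and every $i$, either $P\sigma_i$ is a node of $D(W)$, or $P\doteq P'\sigma_i$ for some node $P'$ of $D(W)$.
   Context: Fix $n\ge 2$. $SB_n^+$ is the monoid with generators $\sigma_1,\dots,\sigma_{n-1},x_1,\dots,x_{n-1}$ and relations: $\sigma_i\sigma_j=\sigma_j\sigma_i$ and $x_ix_j=x_jx_i$ if $|i-j|>1$; $x_i\sigma_j=\sigma_jx_i$ if $|i-j|\ne 1$; $\sigma_i\sigma_{i+1}\sigma_i=\sigma_{i+1}\sigma_i\sigma_{i+1}$; $\sigma_i\sigma_{i+1}x_i=x_{i+1}\sigma_i\sigma_{i+1}$; $\sigma_{i+1}\sigma_ix_{i+1}=x_i\sigma_{i+1}\sigma_i$. Positive words are words in $\sigma_i,x_i$; $A\doteq B$ means equality in $SB_n^+$. $\Delta\equiv\sigma_1\cdots\sigma_{n-1}\,\sigma_1\cdots\sigma_{n-2}\cdots\sigma_1\sigma_2\,\sigma_1$. The (Cayley) diagram $D(W)$ of a positive word $W$ (Garside's diagram): its nodes are the elements $P$ of $SB_n^+$ that are left divisors of $W$ (i.e. $W\doteq PQ$ for some positive $Q$), including the empty word; for a generator $g\in\{\sigma_i,x_i\}$ there is a directed edge labelled $g$ from node $P$ to node $P'$ whenever $P'\doteq Pg$. *)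

(* Defs.v *)
(* the positive singular braid monoid SB_n^+ as the quotient of
   the free monoid on sigma_1..sigma_{n-1}, x_1..x_{n-1} by the congruence
   generated by the defining relations. *)
From Stdlib Require Import Arith List Lia.
Import ListNotations.

Inductive gen : Type := Sg (i : nat) | Xg (i : nat).

Definition gidx (g : gen) : nat := match g with Sg i => i | Xg i => i end.

Definition valid_gen (n : nat) (g : gen) : Prop := 1 <= gidx g /\ gidx g <= n - 1.

Definition word := list gen.
Definition positive_word (n : nat) (w : word) : Prop := Forall (valid_gen n) w.

Inductive sb_rel (n : nat) : word -> word -> Prop :=
| rel_ss : forall i j, 1 <= i <= n - 1 -> 1 <= j <= n - 1 -> i + 1 < j \/ j + 1 < i ->
    sb_rel n [Sg i; Sg j] [Sg j; Sg i]
| rel_xx : forall i j, 1 <= i <= n - 1 -> 1 <= j <= n - 1 -> i + 1 < j \/ j + 1 < i ->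
    sb_rel n [Xg i; Xg j] [Xg j; Xg i]
| rel_xs : forall i j, 1 <= i <= n - 1 -> 1 <= j <= n - 1 -> i <> j + 1 -> j <> i + 1 ->
    sb_rel n [Xg i; Sg j] [Sg j; Xg i]
| rel_sss : forall i, 1 <= i -> i + 1 <= n - 1 ->
    sb_rel n [Sg i; Sg (i+1); Sg i] [Sg (i+1); Sg i; Sg (i+1)]
| rel_ssx : forall i, 1 <= i -> i + 1 <= n - 1 ->
    sb_rel n [Sg i; Sg (i+1); Xg i] [Xg (i+1); Sg i; Sg (i+1)]
| rel_ssx' : forall i, 1 <= i -> i + 1 <= n - 1 ->
    sb_rel n [Sg (i+1); Sg i; Xg (i+1)] [Xg i; Sg (i+1); Sg i].

(* A ≐ B : equality in SB_n^+ (congruence generated by sb_rel) *)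
Inductive sb_eq (n : nat) : word -> word -> Prop :=
| sb_refl : forall w, sb_eq n w w
| sb_sym : forall u v, sb_eq n u v -> sb_eq n v u
| sb_trans : forall u v w, sb_eq n u v -> sb_eq n v w -> sb_eq n u w
| sb_step : forall A L R B, sb_rel n L R -> sb_eq n (A ++ L ++ B) (A ++ R ++ B).

(* Garside element Delta = s1..s_{n-1} s1..s_{n-2} ... s1 s2 s1 *)
Definition Delta (n : nat) : word :=
  flat_map (fun k => map Sg (seq 1 (n - 1 - k))) (seq 0 (n - 1)).

(* P is a node of the diagram D(W): a (positive word representing a) left
   divisor of W in SB_n^+ *)
Definition node (n : nat) (W P : word) : Prop :=
  positive_word n P /\ exists Q, positive_word n Q /\ sb_eq n W (P ++ Q).

(* Main.v *)
Require Import Defs.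
From Stdlib Require Import Arith List Lia Bool Setoid Morphisms.
Import ListNotations.
Open Scope bool_scope.


Inductive code := CEq | CSucc | CPred | CFar.
Definition rel (i j : nat) : code :=
  if i =? j then CEq else if i + 1 =? j then CSucc else if j + 1 =? i then CPred else CFar.
Definition vi (n i : nat) : bool := (1 <=? i) && (i <=? n - 1).
Definition iseq (c : code) : bool := match c with CEq => true | _ => false end.

Inductive gI (I : Type) := SI (i : I) | XI (i : I).
Arguments SI {I}. Arguments XI {I}.
Definition wI (I : Type) := list (gI I).
Definition gidxI {I} (g : gI I) : I := match g with SI i => i | XI i => i end.
Definition geqI (I : Type) (R : I -> I -> code) (a b : gI I) : bool :=
  match a, b with SI i, SI j => iseq (R i j) | XI i, XI j => iseq (R i j) | _, _ => false end.
Definition comp0I (I : Type) (R : I -> I -> code) (a b : gI I) : option (wI I * wI I) :=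
  match a, b with
  | SI i, SI j => match R i j with CEq => None | CSucc | CPred => Some ([b; a], [a; b]) | CFar => Some ([b], [a]) end
  | XI i, XI j => match R i j with CFar => Some ([b], [a]) | _ => None end
  | XI i, SI j => match R i j with
      | CSucc | CPred => Some ([SI j; SI i], [SI i; XI j]) | _ => Some ([b], [a]) end
  | SI i, XI j => match R i j with
      | CSucc | CPred => Some ([SI j; XI i], [SI i; SI j]) | _ => Some ([b], [a]) end
  end.
Definition compI (I : Type) (R : I -> I -> code) (V : I -> bool) (a b : gI I) : option (wI I * wI I) :=
  if V (gidxI a) && V (gidxI b) then comp0I I R a b else None.
Inductive resI (I : Type) := OkI (p q : wI I) | FailI | NoFuelI.
Arguments OkI {I}. Arguments FailI {I}. Arguments NoFuelI {I}.
Fixpoint revI (I : Type) (R : I -> I -> code) (V : I -> bool) (f : nat) (p q : wI I) : resI I :=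
  match p, q with
  | [], _ => OkI q []
  | _, [] => OkI [] p
  | a :: p1, b :: q1 =>
    match f with
    | 0 => NoFuelI
    | S f =>
      if geqI I R a b then revI I R V f p1 q1 else
      match compI I R V a b with
      | None => FailI
      | Some (u, v) =>
        match revI I R V f p1 u with
        | OkI p1' u1 =>
          match revI I R V f q1 v with
          | OkI q1' v1 =>
            match revI I R V f u1 v1 with
            | OkI u2 v2 => OkI (p1' ++ u2) (q1' ++ v2)
            | e => e end
          | e => e end
        | e => e end
      end
    end
  end.
Definition FU := 4.
Definition isnil {T} (l : list T) := match l with [] => true | _ => false end.
Definition cubeI (I : Type) (R : I -> I -> code) (V : I -> bool) (a b c : gI I) : bool :=
  if geqI I R a b || geqI I R b c || geqI I R a c then true else
  match compI I R V a b, compI I R V b c with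
  | Some (u1, v1), Some (u2, v2) =>
    match revI I R V FU v1 u2 with
    | FailI => true
    | NoFuelI => false
    | OkI p q =>
      match compI I R V a c with
      | None => false
      | Some (u3, v3) =>
        match revI I R V FU u3 (u1 ++ p), revI I R V FU v3 (v2 ++ q) with
        | OkI r e, OkI r' e' =>
          isnil e && isnil e' &&
          match revI I R V FU r r' with OkI x y => isnil x && isnil y | _ => false end
        | _, _ => false
        end
      end
    end
  | _, _ => true
  end.

Inductive i3 := A0 | A1 | A2.
Definition flip (c : code) := match c with CSucc => CPred | CPred => CSucc | c => c end.
Definition tab (c01 c12 c02 : code) (x y : i3) : code :=
  match x, y with
  | A0, A1 => c01 | A1, A0 => flip c01
  | A1, A2 => c12 | A2, A1 => flip c12
  | A0, A2 => c02 | A2, A0 => flip c02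
  | _, _ => CEq end.
Definition vtab (v0 v1 v2 : bool) (x : i3) := match x with A0 => v0 | A1 => v1 | A2 => v2 end.
Definition codes := [CEq; CSucc; CPred; CFar].
Definition bools := [true; false].
Definition gens (x : i3) : list (gI i3) := [SI x; XI x].
Definition code_eqb (c d : code) : bool :=
  match c, d with CEq, CEq | CSucc, CSucc | CPred, CPred | CFar, CFar => true | _, _ => false end.
Definition realb (c01 c12 c02 : code) : bool :=
  existsb (fun i => existsb (fun j => existsb (fun k =>
    code_eqb (rel i j) c01 && code_eqb (rel j k) c12 && code_eqb (rel i k) c02)
    (seq 0 7)) (seq 0 7)) (seq 0 7).
Definition check_one c01 c12 c02 v0 v1 v2 a b c :=
  negb (realb c01 c12 c02) || cubeI i3 (tab c01 c12 c02) (vtab v0 v1 v2) a b c.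
Definition check_all : bool :=
  forallb (fun c01 => forallb (fun c12 => forallb (fun c02 =>
  forallb (fun v0 => forallb (fun v1 => forallb (fun v2 =>
  forallb (fun a => forallb (fun b => forallb (fun c =>
    check_one c01 c12 c02 v0 v1 v2 a b c) (gens A2)) (gens A1)) (gens A0)
  ) bools) bools) bools) codes) codes) codes.
Lemma check_all_ok : forallb (fun c01 => forallb (fun c12 => forallb (fun c02 =>
  forallb (fun v0 => forallb (fun v1 => forallb (fun v2 =>
  forallb (fun a => forallb (fun b => forallb (fun c =>
    check_one c01 c12 c02 v0 v1 v2 a b c) (gens A2)) (gens A1)) (gens A0)
  ) bools) bools) bools) codes) codes) codes = true.
Proof. vm_compute. reflexivity. Qed.


Definition gen_eq_dec (a b : gen) : {a = b} + {a <> b}.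
Proof. decide equality; apply Nat.eq_dec. Defined.

Definition geq (a b : gen) : bool :=
  match a, b with Sg i, Sg j => iseq (rel i j) | Xg i, Xg j => iseq (rel i j) | _, _ => false end.
Definition comp0 (a b : gen) : option (word * word) :=
  match a, b with
  | Sg i, Sg j => match rel i j with CEq => None | CSucc | CPred => Some ([b; a], [a; b]) | CFar => Some ([b], [a]) end
  | Xg i, Xg j => match rel i j with CFar => Some ([b], [a]) | _ => None end
  | Xg i, Sg j => match rel i j with
      | CSucc | CPred => Some ([Sg j; Sg i], [Sg i; Xg j]) | _ => Some ([b], [a]) end
  | Sg i, Xg j => match rel i j with
      | CSucc | CPred => Some ([Sg j; Xg i], [Sg i; Sg j]) | _ => Some ([b], [a]) end
  end.
Definition comp (n : nat) (a b : gen) : option (word * word) :=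
  if vi n (gidx a) && vi n (gidx b) then comp0 a b else None.
Inductive res := Ok (p q : word) | Fail | NoFuel.
Fixpoint revw (n f : nat) (p q : word) : res :=
  match p, q with
  | [], _ => Ok q []
  | _, [] => Ok [] p
  | a :: p1, b :: q1 =>
    match f with
    | 0 => NoFuel
    | S f =>
      if geq a b then revw n f p1 q1 else
      match comp n a b with
      | None => Fail
      | Some (u, v) =>
        match revw n f p1 u with
        | Ok p1' u1 =>
          match revw n f q1 v with
          | Ok q1' v1 =>
            match revw n f u1 v1 with
            | Ok u2 v2 => Ok (p1' ++ u2) (q1' ++ v2)
            | e => e end
          | e => e end
        | e => e end
      end
    end
  end.
Definition cube (n : nat) (a b c : gen) : bool :=
  if geq a b || geq b c || geq a c then true else
  match comp n a b, comp n b c with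
  | Some (u1, v1), Some (u2, v2) =>
    match revw n FU v1 u2 with
    | Fail => true
    | NoFuel => false
    | Ok p q =>
      match comp n a c with
      | None => false
      | Some (u3, v3) =>
        match revw n FU u3 (u1 ++ p), revw n FU v3 (v2 ++ q) with
        | Ok r e, Ok r' e' =>
          isnil e && isnil e' &&
          match revw n FU r r' with Ok x y => isnil x && isnil y | _ => false end
        | _, _ => false
        end
      end
    end
  | _, _ => true
  end.

Definition mg (sg : i3 -> nat) (g : gI i3) : gen := match g with SI x => Sg (sg x) | XI x => Xg (sg x) end.
Definition mw sg := map (mg sg).
Definition mres sg (r : resI i3) : res :=
  match r with OkI p q => Ok (mw sg p) (mw sg q) | FailI => Fail | NoFuelI => NoFuel end.

Lemma geq_sim sg R (HR : forall x y, R x y = rel (sg x) (sg y)) a b :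
  geq (mg sg a) (mg sg b) = geqI i3 R a b.
Proof. destruct a, b; simpl; rewrite ?HR; reflexivity. Qed.

Lemma comp_sim n sg R V (HR : forall x y, R x y = rel (sg x) (sg y))
  (HV : forall x, V x = vi n (sg x)) a b : comp n (mg sg a) (mg sg b) =
  match compI i3 R V a b with Some (u, v) => Some (mw sg u, mw sg v) | None => None end.
Proof.
  unfold comp, compI. destruct a, b; simpl; rewrite !HV; destruct (vi n _ && vi n _); try reflexivity;
  simpl; rewrite HR; destruct (rel _ _); reflexivity.
Qed.

Lemma revw_sim n sg R V (HR : forall x y, R x y = rel (sg x) (sg y))
  (HV : forall x, V x = vi n (sg x)) f p q :
  revw n f (mw sg p) (mw sg q) = mres sg (revI i3 R V f p q).
Proof.
  revert p q; induction f as [|f IH]; intros [|a p] [|b q]; simpl; try reflexivity.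
  rewrite (geq_sim sg R HR). destruct (geqI i3 R a b); [apply IH|].
  rewrite (comp_sim n sg R V HR HV). destruct (compI i3 R V a b) as [[u v]|]; [|reflexivity].
  rewrite IH. destruct (revI i3 R V f p u) as [p1 u1| |]; simpl; try reflexivity.
  rewrite IH. destruct (revI i3 R V f q v) as [q1 v1| |]; simpl; try reflexivity.
  rewrite IH. destruct (revI i3 R V f u1 v1) as [u2 v2| |]; simpl; try reflexivity.
  unfold mw; rewrite !map_app; reflexivity.
Qed.

Lemma isnil_map sg l : isnil (mw sg l) = isnil l.
Proof. destruct l; reflexivity. Qed.

Lemma cube_sim n sg R V (HR : forall x y, R x y = rel (sg x) (sg y))
  (HV : forall x, V x = vi n (sg x)) a b c :
  cube n (mg sg a) (mg sg b) (mg sg c) = cubeI i3 R V a b c.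
Proof.
  unfold cube, cubeI. rewrite !(geq_sim sg R HR).
  destruct (geqI i3 R a b || geqI i3 R b c || geqI i3 R a c); [reflexivity|].
  rewrite !(comp_sim n sg R V HR HV).
  destruct (compI i3 R V a b) as [[u1 v1]|]; [|reflexivity].
  destruct (compI i3 R V b c) as [[u2 v2]|]; [|reflexivity].
  rewrite (revw_sim n sg R V HR HV). destruct (revI i3 R V FU v1 u2) as [p q| |]; cbv beta iota delta [mres]; try reflexivity.
  destruct (compI i3 R V a c) as [[u3 v3]|]; [|reflexivity].
  cbv beta iota delta [mres]. unfold mw; rewrite <- !map_app. fold (mw sg). rewrite !(revw_sim n sg R V HR HV).
  destruct (revI i3 R V FU u3 (u1 ++ p)) as [r e| |]; cbv beta iota delta [mres]; try reflexivity;
  destruct (revI i3 R V FU v3 (v2 ++ q)) as [r' e'| |]; cbv beta iota delta [mres]; try reflexivity.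
  rewrite !isnil_map, (revw_sim n sg R V HR HV).
  destruct (revI i3 R V FU r r') as [x y| |]; cbv beta iota delta [mres]; rewrite ?isnil_map; reflexivity.
Qed.


Inductive rel_spec (i j : nat) : code -> Prop :=
| RS_eq : i = j -> rel_spec i j CEq
| RS_succ : i + 1 = j -> rel_spec i j CSucc
| RS_pred : j + 1 = i -> rel_spec i j CPred
| RS_far : i <> j -> i + 1 <> j -> j + 1 <> i -> rel_spec i j CFar.
Lemma relP i j : rel_spec i j (rel i j).
Proof.
  unfold rel. destruct (Nat.eqb_spec i j); [now constructor|].
  destruct (Nat.eqb_spec (i+1) j); [now constructor|].
  destruct (Nat.eqb_spec (j+1) i); [now constructor|]. now constructor.
Qed.
Lemma rel_refl i : rel i i = CEq.
Proof. destruct (relP i i); auto; lia. Qed.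
Lemma rel_flip i j : rel j i = flip (rel i j).
Proof. destruct (relP i j), (relP j i); simpl; auto; lia. Qed.
Lemma realb_ok i j k : realb (rel i j) (rel j k) (rel i k) = true.
Proof.
  destruct (relP i j), (relP j k), (relP i k); try (exfalso; lia); vm_compute; reflexivity.
Qed.

Lemma forallb_codes (P : code -> bool) : forallb P codes = true -> forall c, P c = true.
Proof. simpl. intros H c. repeat rewrite andb_true_iff in H. destruct c; tauto. Qed.
Lemma forallb_bools (P : bool -> bool) : forallb P bools = true -> forall c, P c = true.
Proof. simpl. intros H c. repeat rewrite andb_true_iff in H. destruct c; tauto. Qed.
Lemma forallb_gens x (P : gI i3 -> bool) : forallb P (gens x) = true -> forall c, In c (gens x) -> P c = true.
Proof. intros H c Hc. rewrite forallb_forall in H. auto. Qed.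

Lemma check_spec c01 c12 c02 v0 v1 v2 a b c :
  In a (gens A0) -> In b (gens A1) -> In c (gens A2) -> realb c01 c12 c02 = true ->
  cubeI i3 (tab c01 c12 c02) (vtab v0 v1 v2) a b c = true.
Proof.
  intros Ha Hb Hc Hr.
  pose proof check_all_ok as H.
  eapply forallb_codes with (c := c01) in H.
  eapply forallb_codes with (c := c12) in H.
  eapply forallb_codes with (c := c02) in H.
  eapply forallb_bools with (c := v0) in H.
  eapply forallb_bools with (c := v1) in H.
  eapply forallb_bools with (c := v2) in H.
  eapply forallb_gens in H; [|exact Ha].
  eapply forallb_gens in H; [|exact Hb].
  eapply forallb_gens in H; [|exact Hc].
  unfold check_one in H. rewrite Hr in H. exact H.
Qed.
Definition sg3 (i j k : nat) (x : i3) : nat := match x with A0 => i | A1 => j | A2 => k end.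
Lemma cube_ok_gen n i j k a' b' c' : In a' (gens A0) -> In b' (gens A1) -> In c' (gens A2) ->
  cube n (mg (sg3 i j k) a') (mg (sg3 i j k) b') (mg (sg3 i j k) c') = true.
Proof.
  intros Ha Hb Hc.
  assert (HR : forall x y, tab (rel i j) (rel j k) (rel i k) x y = rel (sg3 i j k x) (sg3 i j k y)).
  { intros [] []; simpl; rewrite ?rel_refl; try reflexivity; symmetry; apply rel_flip. }
  assert (HV : forall x, vtab (vi n i) (vi n j) (vi n k) x = vi n (sg3 i j k x)).
  { intros []; reflexivity. }
  rewrite (cube_sim n _ _ _ HR HV).
  apply check_spec; auto. apply realb_ok.
Qed.

Lemma cube_ok n a b c : cube n a b c = true.
Proof.
  destruct a as [i|i], b as [j|j], c as [k|k];
  [ exact (cube_ok_gen n i j k (SI A0) (SI A1) (SI A2) ltac:(simpl; auto) ltac:(simpl; auto) ltac:(simpl; auto))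
  | exact (cube_ok_gen n i j k (SI A0) (SI A1) (XI A2) ltac:(simpl; auto) ltac:(simpl; auto) ltac:(simpl; auto))
  | exact (cube_ok_gen n i j k (SI A0) (XI A1) (SI A2) ltac:(simpl; auto) ltac:(simpl; auto) ltac:(simpl; auto))
  | exact (cube_ok_gen n i j k (SI A0) (XI A1) (XI A2) ltac:(simpl; auto) ltac:(simpl; auto) ltac:(simpl; auto))
  | exact (cube_ok_gen n i j k (XI A0) (SI A1) (SI A2) ltac:(simpl; auto) ltac:(simpl; auto) ltac:(simpl; auto))
  | exact (cube_ok_gen n i j k (XI A0) (SI A1) (XI A2) ltac:(simpl; auto) ltac:(simpl; auto) ltac:(simpl; auto))
  | exact (cube_ok_gen n i j k (XI A0) (XI A1) (SI A2) ltac:(simpl; auto) ltac:(simpl; auto) ltac:(simpl; auto))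
  | exact (cube_ok_gen n i j k (XI A0) (XI A1) (XI A2) ltac:(simpl; auto) ltac:(simpl; auto) ltac:(simpl; auto)) ].
Qed.


Lemma rel_to_eq n L R : sb_rel n L R -> sb_eq n L R.
Proof. intro H. pose proof (sb_step n [] L R [] H) as H0. simpl in H0. rewrite !app_nil_r in H0. exact H0. Qed.

#[export] Instance sb_equiv n : Equivalence (sb_eq n).
Proof. split; [intro; apply sb_refl | intros ??; apply sb_sym | intros ???; apply sb_trans]. Qed.

Lemma sb_app_l n w u v : sb_eq n u v -> sb_eq n (w ++ u) (w ++ v).
Proof.
  induction 1; [reflexivity|symmetry; auto|etransitivity; eauto|].
  rewrite (app_assoc w A (L ++ B)), (app_assoc w A (R ++ B)). apply sb_step; assumption.
Qed.
Lemma sb_app_r n w u v : sb_eq n u v -> sb_eq n (u ++ w) (v ++ w).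
Proof.
  induction 1; [reflexivity|symmetry; auto|etransitivity; eauto|].
  rewrite <- !app_assoc. apply sb_step; assumption.
Qed.
#[export] Instance app_proper n : Proper (sb_eq n ==> sb_eq n ==> sb_eq n) (@app gen).
Proof. intros u u' Hu v v' Hv. transitivity (u' ++ v); [apply sb_app_r|apply sb_app_l]; auto. Qed.
#[export] Instance cons_proper n : Proper (eq ==> sb_eq n ==> sb_eq n) (@cons gen).
Proof. intros a b -> u v H. apply (sb_app_l n [b] u v H). Qed.

Lemma rel_len n L R : sb_rel n L R -> length L = length R.
Proof. destruct 1; reflexivity. Qed.
Lemma sb_len n u v : sb_eq n u v -> length u = length v.
Proof.
  induction 1; auto; try congruence.
  rewrite !length_app. rewrite (rel_len n L R); auto.
Qed.

Lemma rel_pos n L R : sb_rel n L R -> positive_word n L /\ positive_word n R.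
Proof.
  unfold positive_word, valid_gen.
  destruct 1; split; repeat constructor; simpl; lia.
Qed.
Lemma sb_pos n u v : sb_eq n u v -> (positive_word n u <-> positive_word n v).
Proof.
  induction 1; try tauto.
  unfold positive_word in *. rewrite !Forall_app.
  destruct (rel_pos n L R H). unfold positive_word in *. tauto.
Qed.

Inductive vi_spec (n i : nat) : bool -> Prop :=
| VT : 1 <= i <= n - 1 -> vi_spec n i true
| VF : ~ (1 <= i <= n - 1) -> vi_spec n i false.
Lemma viP n i : vi_spec n i (vi n i).
Proof.
  unfold vi. destruct (Nat.leb_spec 1 i), (Nat.leb_spec i (n-1)); simpl; constructor; lia.
Qed.

Ltac dec := repeat match goal with
  | |- context [rel ?x ?y] => destruct (relP x y); try (exfalso; lia)
  | |- context [vi ?n ?x] => destruct (viP n x); try (exfalso; lia)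
  | H : context [rel ?x ?y] |- _ => destruct (relP x y); try (exfalso; lia)
  | H : context [vi ?n ?x] |- _ => destruct (viP n x); try (exfalso; lia)
  end.

Ltac relt := first
  [ apply rel_ss; lia | apply rel_xx; lia | apply rel_xs; lia | apply rel_sss; lia
  | apply rel_ssx; lia | apply rel_ssx'; lia ].

Lemma comp_sound n a b u v : comp n a b = Some (u, v) -> sb_eq n (a :: u) (b :: v).
Proof.
  unfold comp, comp0. destruct a as [i|i], b as [j|j]; simpl gidx; dec; simpl; intro Hs; try discriminate;
  injection Hs as <- <-; subst;
  first [ apply rel_to_eq; relt | symmetry; apply rel_to_eq; relt ].
Qed.

Lemma comp_sym n a b u v : comp n a b = Some (u, v) -> comp n b a = Some (v, u).
Proof.
  unfold comp. destruct a as [i|i], b as [j|j]; simpl gidx; dec; simpl; intro Hs; try discriminate;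
  dec; try discriminate; injection Hs as <- <-; reflexivity.
Qed.

Lemma comp_ne n a b u v : comp n a b = Some (u, v) -> a <> b.
Proof.
  intros H ->. unfold comp in H. destruct b as [i|i]; simpl in H; rewrite rel_refl in H;
  destruct (vi n i); discriminate.
Qed.

Lemma rel_comp n L R : sb_rel n L R ->
  exists a b L' R', L = a :: L' /\ R = b :: R' /\ a <> b /\ comp n a b = Some (L', R').
Proof.
  destruct 1; do 4 eexists; (split; [reflexivity|split; [reflexivity|split; [intro Hc; inversion Hc; lia|]]]);
  unfold comp, comp0; simpl; dec; reflexivity.
Qed.

Lemma geq_true a b : geq a b = true -> a = b.
Proof. destruct a as [i|i], b as [j|j]; simpl; dec; simpl; congruence. Qed.
Lemma geq_false a b : geq a b = false -> a <> b.
Proof. intros H ->. destruct b; simpl in H; rewrite rel_refl in H; discriminate. Qed.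


Lemma rev_sound n f : forall p q p' q', revw n f p q = Ok p' q' -> sb_eq n (p ++ p') (q ++ q').
Proof.
  induction f as [|f IH]; intros [|a p] [|b q] p' q' H; simpl in H;
    try (injection H as <- <-; simpl; rewrite ?app_nil_r; reflexivity); try discriminate.
  destruct (geq a b) eqn:E.
  - apply geq_true in E; subst. simpl. rewrite (IH _ _ _ _ H). reflexivity.
  - destruct (comp n a b) as [[u v]|] eqn:Ec; [|discriminate].
    destruct (revw n f p u) as [p1 u1| |] eqn:E1; try discriminate.
    destruct (revw n f q v) as [q1 v1| |] eqn:E2; try discriminate.
    destruct (revw n f u1 v1) as [u2 v2| |] eqn:E3; try discriminate.
    injection H as <- <-.
    apply IH in E1, E2, E3. apply comp_sound in Ec.
    simpl.
    transitivity (a :: (p ++ p1) ++ u2); [rewrite app_assoc; reflexivity|].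
    rewrite E1. rewrite <- app_assoc, E3.
    transitivity ((a :: u) ++ v1 ++ v2); [reflexivity|]. rewrite Ec. simpl.
    rewrite app_assoc, <- E2, <- app_assoc. reflexivity.
Qed.

Definition Concl n a b X Y :=
  (a = b /\ sb_eq n X Y) \/
  (a <> b /\ exists u v Z, comp n a b = Some (u, v) /\ sb_eq n X (u ++ Z) /\ sb_eq n Y (v ++ Z)).
Definition Lm n m := forall a b X Y, length (a :: X) <= m -> sb_eq n (a :: X) (b :: Y) -> Concl n a b X Y.

Lemma cancel_word n m (H : Lm n m) w : forall X Y,
  length (w ++ X) <= m -> sb_eq n (w ++ X) (w ++ Y) -> sb_eq n X Y.
Proof.
  induction w as [|a w IH]; simpl; intros X Y Hl He; auto.
  destruct (H a a _ _ Hl He) as [[_ E]|[Hne _]]; [|congruence].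
  apply IH; auto. simpl in Hl; lia.
Qed.

Definition Good n X Y r :=
  match r with
  | Ok p' q' => exists T, sb_eq n X (p' ++ T) /\ sb_eq n Y (q' ++ T)
  | Fail => False
  | NoFuel => True
  end.

Lemma rev_complete n m (H : Lm n m) f : forall p q X Y,
  length (p ++ X) <= m -> sb_eq n (p ++ X) (q ++ Y) -> Good n X Y (revw n f p q).
Proof.
  induction f as [|f IH]; intros [|a p] [|b q] X Y Hl He; simpl.
  all: try (exists Y; split; [exact He|reflexivity]).
  all: try (exists X; split; [reflexivity|symmetry; exact He]).
  all: try exact I.
  simpl in He, Hl. pose proof (sb_len _ _ _ He) as Hlen. simpl in Hlen.
  destruct (H a b _ _ Hl He) as [[Eab E]|[Hne [u0 [v0 [Z [Ec [E1 E2]]]]]]].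
  - subst b. assert (geq a a = true) as ->. { destruct a; simpl; rewrite rel_refl; reflexivity. }
    apply IH; auto. simpl in Hl; lia.
  - assert (geq a b = false) as ->. { destruct (geq a b) eqn:G; auto. apply geq_true in G; congruence. }
    rewrite Ec.
    pose proof (sb_len _ _ _ E1) as L1. pose proof (sb_len _ _ _ E2) as L2.
    simpl in Hl, Hlen. rewrite ?length_app in *.
    assert (G1 := IH p u0 X Z ltac:(rewrite length_app; lia) E1).
    destruct (revw n f p u0) as [p1 u1| |]; simpl in G1; try contradiction; [|exact I].
    assert (G2 := IH q v0 Y Z ltac:(rewrite length_app; lia) E2).
    destruct (revw n f q v0) as [q1 v1| |]; simpl in G2; try contradiction; [|exact I].
    destruct G1 as [T1 [F1 F2]]. destruct G2 as [T2 [F3 F4]].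
    pose proof (sb_len _ _ _ F2) as L3.
    assert (G3 := IH u1 v1 T1 T2 ltac:(rewrite <- L3; lia)
                    ltac:(rewrite <- F2, <- F4; reflexivity)).
    destruct (revw n f u1 v1) as [u2 v2| |]; simpl in G3; try contradiction; [|exact I].
    destruct G3 as [T [F5 F6]]. exists T. split.
    + rewrite F1, F5, app_assoc. reflexivity.
    + rewrite F3, F6, app_assoc. reflexivity.
Qed.


Lemma Concl_sym n a b X Y : Concl n a b X Y -> Concl n b a Y X.
Proof.
  intros [[-> E]|[Hne [u [v [Z [Ec [E1 E2]]]]]]].
  - left; split; [reflexivity|symmetry; exact E].
  - right; split; [congruence|]. exists v, u, Z. split; [apply comp_sym; exact Ec|auto].
Qed.
Lemma Concl_l n a b X X' Y : sb_eq n X X' -> Concl n a b X Y -> Concl n a b X' Y.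
Proof.
  intros HX [[-> E]|[Hne [u [v [Z [Ec [E1 E2]]]]]]].
  - left; split; [reflexivity|rewrite <- HX; exact E].
  - right; split; [exact Hne|]. exists u, v, Z. rewrite <- HX. auto.
Qed.

Lemma isnil_nil {T} (l : list T) : isnil l = true -> l = [].
Proof. destruct l; simpl; congruence. Qed.

Lemma Concl_trans n m (H : Lm n m) a b c X Y Z : length Y <= m ->
  Concl n a b X Y -> Concl n b c Y Z -> Concl n a c X Z.
Proof.
  intros HY C1 C2.
  destruct C1 as [[<- E]|[Hab [u1 [v1 [Z1 [Ec1 [E1 E2]]]]]]].
  { apply Concl_l with Y; [symmetry; exact E|exact C2]. }
  destruct C2 as [[<- E]|[Hbc [u2 [v2 [Z2 [Ec2 [E3 E4]]]]]]].
  { right. split; [exact Hab|]. exists u1, v1, Z1. rewrite <- E. auto. }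
  pose proof (sb_len _ _ _ E2) as LY. rewrite length_app in LY.
  destruct (gen_eq_dec a c) as [<-|Hac].
  - apply comp_sym in Ec1. rewrite Ec1 in Ec2. injection Ec2 as <- <-.
    left; split; [reflexivity|].
    assert (sb_eq n Z1 Z2).
    { apply (cancel_word n m H v1). rewrite length_app; lia. rewrite <- E2, <- E3. reflexivity. }
    rewrite E1, E4, H0. reflexivity.
  - pose proof (cube_ok n a b c) as Hc. unfold cube in Hc.
    assert (geq a b = false) as G1 by (destruct (geq a b) eqn:G; auto; apply geq_true in G; congruence).
    assert (geq b c = false) as G2 by (destruct (geq b c) eqn:G; auto; apply geq_true in G; congruence).
    assert (geq a c = false) as G3 by (destruct (geq a c) eqn:G; auto; apply geq_true in G; congruence).
    rewrite G1, G2, G3, Ec1, Ec2 in Hc. cbv beta iota delta [orb] in Hc.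
    assert (Gd := rev_complete n m H FU v1 u2 Z1 Z2 ltac:(rewrite length_app; lia)
                     ltac:(rewrite <- E2, <- E3; reflexivity)).
    destruct (revw n FU v1 u2) as [p q| |]; simpl in Gd; try contradiction; [|discriminate].
    destruct Gd as [T [F1 F2]].
    destruct (comp n a c) as [[u3 v3]|] eqn:Ec3; [|discriminate].
    destruct (revw n FU u3 (u1 ++ p)) as [r e| |] eqn:R1; try discriminate.
    destruct (revw n FU v3 (v2 ++ q)) as [r' e'| |] eqn:R2; try discriminate.
    destruct (revw n FU r r') as [x y| |] eqn:R3; [|rewrite !andb_false_r in Hc; discriminate..].
    rewrite !andb_true_iff in Hc. destruct Hc as [[He He2] [Hx Hy]].
    apply isnil_nil in He, He2, Hx, Hy. subst.
    apply rev_sound in R1, R2, R3. rewrite ?app_nil_r in R1, R2, R3. rewrite ?app_nil_r in R3.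
    right. split; [exact Hac|]. exists u3, v3, (r ++ T). split; [exact Ec3|split].
    + rewrite E1, F1, app_assoc, <- R1, app_assoc. reflexivity.
    + rewrite E4, F2, app_assoc, <- R2, <- R3, app_assoc. reflexivity.
Qed.

Definition Rr n (u v : word) : Prop :=
  match u, v with a :: X, b :: Y => Concl n a b X Y | _, _ => False end.

Lemma R_ind n m (H : Lm n m) : forall u v, sb_eq n u v -> length u = S m -> Rr n u v.
Proof.
  induction 1 as [w|u v Huv IH|u v w Huv IH1 Hvw IH2|A L R B Hr]; intro Hl.
  - destruct w as [|a X]; [discriminate|]. left; split; reflexivity.
  - pose proof (sb_len _ _ _ Huv) as L1. specialize (IH ltac:(lia)).
    destruct u as [|a X], v as [|b Y]; simpl in *; try contradiction. apply Concl_sym; exact IH.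
  - pose proof (sb_len _ _ _ Huv) as L1. specialize (IH1 Hl). specialize (IH2 ltac:(lia)).
    destruct u as [|a X], v as [|b Y], w as [|c Z]; simpl in *; try contradiction.
    apply (Concl_trans n m H a b c X Y Z); auto. lia.
  - destruct A as [|a A'].
    + destruct (rel_comp n L R Hr) as [a [b [L' [R' [-> [-> [Hne Ec]]]]]]].
      simpl. right. split; [exact Hne|]. exists L', R', B. split; [exact Ec|split; reflexivity].
    + simpl. left. split; [reflexivity|]. apply sb_step; exact Hr.
Qed.

Lemma L_all n m : Lm n m.
Proof.
  induction m as [|m IH]; intros a b X Y Hl He.
  - simpl in Hl; lia.
  - destruct (Nat.le_gt_cases (length (a :: X)) m) as [Hle|Hgt].
    + apply IH; auto.
    + exact (R_ind n m IH (a :: X) (b :: Y) He ltac:(lia)).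
Qed.

Lemma garside n a b X Y : sb_eq n (a :: X) (b :: Y) -> Concl n a b X Y.
Proof. intro He. apply (L_all n (length (a :: X))); auto. Qed.

Lemma cancel n w X Y : sb_eq n (w ++ X) (w ++ Y) -> sb_eq n X Y.
Proof. intro He. apply (cancel_word n (length (w ++ X)) (L_all n _) w); auto. Qed.


Fixpoint Dl (m : nat) : word := match m with 0 => [] | S m' => map Sg (seq 1 m) ++ Dl m' end.

Lemma Delta_Dl_aux M : forall len s, s + len = M ->
  flat_map (fun k => map Sg (seq 1 (M - k))) (seq s len) = Dl len.
Proof.
  induction len as [|len IH]; intros s Hs; [reflexivity|].
  simpl. rewrite (IH (S s)) by lia. replace (M - s) with (S len) by lia. reflexivity.
Qed.
Lemma Delta_Dl n : Delta n = Dl (n - 1).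
Proof. unfold Delta. apply Delta_Dl_aux. lia. Qed.

Lemma comm_past n (l : word) g :
  (forall x, In x l -> sb_eq n [x; g] [g; x]) -> sb_eq n (l ++ [g]) (g :: l).
Proof.
  induction l as [|x l IH]; intro Hc; simpl; [reflexivity|].
  rewrite IH by (intros; apply Hc; simpl; auto).
  change (x :: g :: l) with ([x; g] ++ l). rewrite (Hc x) by (simpl; auto). reflexivity.
Qed.

Lemma shift n m j : m + 1 <= n - 1 -> 1 <= j <= m ->
  sb_eq n (map Sg (seq 1 (S m)) ++ [Sg j]) (Sg (j + 1) :: map Sg (seq 1 (S m))).
Proof.
  intros Hm Hj.
  set (pre := map Sg (seq 1 (j - 1))). set (suf := map Sg (seq (j + 2) (m - j))).
  assert (Hs : map Sg (seq 1 (S m)) = pre ++ [Sg j; Sg (j + 1)] ++ suf).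
  { unfold pre, suf. replace (S m) with ((j - 1) + (2 + (m - j))) by lia.
    rewrite seq_app, map_app. f_equal. replace (1 + (j - 1)) with j by lia. simpl.
    replace (S j) with (j + 1) by lia. replace (S (j + 1)) with (j + 2) by lia. reflexivity. }
  rewrite Hs.
  assert (Hsuf : sb_eq n (suf ++ [Sg j]) (Sg j :: suf)).
  { apply comm_past. intros x Hx. unfold suf in Hx. apply in_map_iff in Hx.
    destruct Hx as [y [<- Hy]]. apply in_seq in Hy. apply rel_to_eq. apply rel_ss; lia. }
  assert (Hpre : sb_eq n (pre ++ [Sg (j + 1)]) (Sg (j + 1) :: pre)).
  { apply comm_past. intros x Hx. unfold pre in Hx. apply in_map_iff in Hx.
    destruct Hx as [y [<- Hy]]. apply in_seq in Hy. apply rel_to_eq. apply rel_ss; lia. }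
  transitivity (pre ++ [Sg j; Sg (j + 1)] ++ (suf ++ [Sg j])).
  { rewrite <- !app_assoc. reflexivity. }
  rewrite Hsuf.
  transitivity (pre ++ [Sg j; Sg (j + 1); Sg j] ++ suf); [reflexivity|].
  rewrite (rel_to_eq n _ _ (rel_sss n j ltac:(lia) ltac:(lia))).
  transitivity ((pre ++ [Sg (j + 1)]) ++ [Sg j; Sg (j + 1)] ++ suf).
  { rewrite <- app_assoc. reflexivity. }
  rewrite Hpre. reflexivity.
Qed.

Lemma Dl_div n m : m <= n - 1 -> forall i, 1 <= i <= m -> exists D', sb_eq n (Dl m) (Sg i :: D').
Proof.
  induction m as [|m IH]; intros Hm i Hi; [lia|].
  destruct (Nat.eq_dec i 1) as [->|Hi1].
  - exists (map Sg (seq 2 m) ++ Dl m). reflexivity.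
  - destruct (IH ltac:(lia) (i - 1) ltac:(lia)) as [D' HD].
    exists (map Sg (seq 1 (S m)) ++ D'). change (Dl (S m)) with (map Sg (seq 1 (S m)) ++ Dl m). rewrite HD.
    change (Sg (i - 1) :: D') with ([Sg (i - 1)] ++ D'). rewrite app_assoc.
    rewrite (shift n m (i - 1)) by lia. replace (i - 1 + 1) with i by lia. reflexivity.
Qed.

Lemma Delta_div n i : 1 <= i <= n - 1 -> exists D', sb_eq n (Delta n) (Sg i :: D').
Proof. intro Hi. rewrite Delta_Dl. apply Dl_div; lia. Qed.


Lemma gar_right n a b X Y : sb_eq n (a :: X) (b :: Y) -> a <> b ->
  exists u v Z, comp n a b = Some (u, v) /\ sb_eq n X (u ++ Z) /\ sb_eq n Y (v ++ Z).
Proof. intros He Hne. destruct (garside n a b X Y He) as [[E _]|[_ H]]; [congruence|exact H]. Qed.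

Lemma comp_head n g i u v : comp n g (Sg i) = Some (u, v) -> exists u', u = Sg i :: u'.
Proof.
  unfold comp, comp0. destruct g as [j|j]; simpl gidx; dec; simpl; intro Hs; try discriminate;
  injection Hs as <- <-; eexists; reflexivity.
Qed.

Lemma adj_step n i j g P0' Q :
  1 <= i <= n - 1 -> 1 <= j <= n - 1 -> (i + 1 = j \/ j + 1 = i) -> (g = Sg j \/ g = Xg j) ->
  ((exists P'', sb_eq n P0' (P'' ++ [Sg j])) \/ (exists Y, sb_eq n (Sg i :: g :: Q) (Sg j :: Y))) ->
  (exists Q', sb_eq n Q (Sg i :: Q')) \/ (exists P', sb_eq n (P0' ++ [Sg i; g]) (P' ++ [Sg i])).
Proof.
  intros Hi Hj Hadj Hg [[P'' HP]|[Y HY]].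
  - right. destruct Hg as [->| ->].
    + exists (P'' ++ [Sg i; Sg j]). rewrite HP, <- !app_assoc. simpl.
      apply sb_app_l. destruct Hadj as [<-|<-].
      * symmetry. apply rel_to_eq. apply rel_sss; lia.
      * apply rel_to_eq. apply rel_sss; lia.
    + exists (P'' ++ [Xg i; Sg j]). rewrite HP, <- !app_assoc. simpl.
      apply sb_app_l. destruct Hadj as [<-|<-].
      * apply rel_to_eq. apply rel_ssx'; lia.
      * apply rel_to_eq. apply rel_ssx; lia.
  - assert (Hij : Sg i <> Sg j) by (intro Hc; injection Hc; lia).
    destruct (gar_right n _ _ _ _ HY Hij) as [u [v [Z [Ec [E1 E2]]]]].
    unfold comp, comp0 in Ec. simpl gidx in Ec. dec; simpl in Ec; try discriminate;
      injection Ec as <- <-.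
    all: left; destruct Hg as [->| ->].
    all: try (exists Z; apply (cancel n [Sg j]); exact E1).
    all: assert (Hxj : Xg j <> Sg j) by discriminate;
         destruct (gar_right n _ _ _ _ E1 Hxj) as [u1 [v1 [Z1 [Ec1 [E3 E4]]]]];
         unfold comp, comp0 in Ec1; simpl gidx in Ec1; rewrite rel_refl in Ec1; dec; simpl in Ec1;
         try discriminate; injection Ec1 as <- <-;
         assert (Hsx : Sg i <> Xg j) by discriminate;
         destruct (gar_right n _ _ _ _ E4 Hsx) as [u2 [v2 [Z2 [Ec2 [E5 E6]]]]];
         unfold comp, comp0 in Ec2; simpl gidx in Ec2; dec; simpl in Ec2;
         try discriminate; injection Ec2 as <- <-.
    all: exists (Sg j :: Sg i :: Z2); rewrite E3, E6; simpl.
    all: change (sb_eq n ([Sg j; Sg i; Sg j] ++ Z2) ([Sg i; Sg j; Sg i] ++ Z2));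
      apply sb_app_r; (subst j || subst i);
      first [ apply rel_to_eq; relt | symmetry; apply rel_to_eq; relt ].
Qed.

Lemma core n W V (hW : positive_word n W) (hWV : sb_eq n W (Delta n ++ V)) :
  forall k P Q, length P <= k -> sb_eq n W (P ++ Q) -> forall i, 1 <= i <= n - 1 ->
  (exists Q', sb_eq n Q (Sg i :: Q')) \/ (exists P', sb_eq n P (P' ++ [Sg i])).
Proof.
  induction k as [|k IH]; intros P Q Hl HW i Hi.
  - destruct P; [|simpl in Hl; lia]. simpl in HW. left.
    destruct (Delta_div n i Hi) as [D' HD]. exists (D' ++ V).
    rewrite <- HW, hWV, HD. reflexivity.
  - destruct P as [|g P0 _] using rev_ind.
    { apply (IH [] Q); simpl; auto; lia. }
    rewrite length_app in Hl. simpl in Hl.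
    destruct (gen_eq_dec g (Sg i)) as [->|Hg].
    { right. exists P0. reflexivity. }
    assert (Hpos : positive_word n ((P0 ++ [g]) ++ Q)) by (apply (sb_pos n W); auto).
    unfold positive_word in Hpos. rewrite !Forall_app in Hpos.
    destruct Hpos as [[_ Hgv] _]. inversion Hgv as [|? ? Hgv' _]; subst. unfold valid_gen in Hgv'.
    assert (HW0 : sb_eq n W (P0 ++ g :: Q)) by (rewrite HW, <- app_assoc; reflexivity).
    destruct (IH P0 (g :: Q) ltac:(lia) HW0 i Hi) as [[Y HY]|[P0' HP0]].
    + destruct (gar_right n _ _ _ _ HY Hg) as [u [v [Z [Ec [E1 E2]]]]].
      destruct (comp_head n g i u v Ec) as [u' ->].
      left. exists (u' ++ Z). exact E1.
    + assert (HP : sb_eq n (P0 ++ [g]) (P0' ++ [Sg i; g])) by (rewrite HP0, <- app_assoc; reflexivity).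
      pose proof (sb_len _ _ _ HP0) as LP0. rewrite length_app in LP0. simpl in LP0.
      assert (HW1 : sb_eq n W (P0' ++ Sg i :: g :: Q)) by (rewrite HW, HP, <- app_assoc; reflexivity).
      assert (Hadj : forall j, 1 <= j <= n - 1 -> (i + 1 = j \/ j + 1 = i) -> (g = Sg j \/ g = Xg j) ->
        (exists Q', sb_eq n Q (Sg i :: Q')) \/ (exists P', sb_eq n (P0 ++ [g]) (P' ++ [Sg i]))).
      { intros j Hj Hij Hgj.
        destruct (adj_step n i j g P0' Q Hi Hj Hij Hgj) as [H1|[P' H2]].
        - destruct (IH P0' (Sg i :: g :: Q) ltac:(lia) HW1 j Hj) as [[Y HY]|[P'' HP'']].
          + right. exists Y. exact HY.
          + left. exists P''. exact HP''.
        - left. exact H1.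
        - right. exists P'. rewrite HP. exact H2. }
      destruct g as [j|j]; simpl in Hgv'; destruct (relP i j) as [E|E|E|E].
      * subst; congruence.
      * apply (Hadj j); auto.
      * apply (Hadj j); auto.
      * right. exists (P0' ++ [Sg j]). rewrite HP, <- app_assoc. apply sb_app_l.
        apply rel_to_eq. apply rel_ss; lia.
      * right. exists (P0' ++ [Xg j]). rewrite HP, <- app_assoc. apply sb_app_l.
        symmetry. apply rel_to_eq. apply rel_xs; lia.
      * apply (Hadj j); auto.
      * apply (Hadj j); auto.
      * right. exists (P0' ++ [Xg j]). rewrite HP, <- app_assoc. apply sb_app_l.
        symmetry. apply rel_to_eq. apply rel_xs; lia.
Qed.

Theorem theorem3p1 (n : nat) (hn : 2 <= n) (W V : word)
  (hW : positive_word n W) (hV : positive_word n V)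
  (hWV : sb_eq n W (Delta n ++ V)) :
  forall P : word, node n W P ->
  forall i : nat, 1 <= i <= n - 1 ->
    node n W (P ++ [Sg i]) \/
    exists P' : word, node n W P' /\ sb_eq n P (P' ++ [Sg i]).
Proof.
  intros P [HPp [Q [HQp HWPQ]]] i Hi.
  destruct (core n W V hW hWV (length P) P Q (le_n _) HWPQ i Hi) as [[Q' HQ]|[P' HP]].
  - left. split.
    + unfold positive_word in *. apply Forall_app. split; [exact HPp|].
      constructor; [unfold valid_gen; simpl; lia|constructor].
    + exists Q'. split.
      * apply (sb_pos n _ _ HQ) in HQp. unfold positive_word in HQp. inversion HQp; auto.
      * rewrite HWPQ, HQ, <- app_assoc. reflexivity.
  - right. exists P'. split; [|exact HP].
    assert (Hp : positive_word n (P' ++ [Sg i])) by (apply (sb_pos n _ _ HP); auto).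
    unfold positive_word in Hp. apply Forall_app in Hp. split; [apply Hp|].
    exists (Sg i :: Q). split.
    + unfold positive_word. constructor; [unfold valid_gen; simpl; lia|exact HQp].
    + rewrite HWPQ, HP, <- app_assoc. reflexivity.
Qed.
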